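(* Let $X$ be a finite alphabet with at least two letters, $k\ge2$, $\mathcal M$ an automaton over $X$, $A:C_{\mathcal M}\to\bar k$, and $(F,c)\in\mathcal F_{\mathcal T_k}$. If $F\le_h(C_{\mathcal M};\le_0,\le_1,A)$, then $B\le_{CA}A\circ f_{\mathcal M}$ for every $B\in\mathbf\Sigma(F)$.
   Context: $f_{\mathcal M}(\xi)$ is the set of states visited infinitely often on input $\xi$; $C_{\mathcal M}=\{f_{\mathcal M}(\xi):\xi\in X^\omega\}$; $c\le_0 d$ iff the states of $d$ are reachable from those of $c$; $c\le_1d$ iff $c\supseteq d$; $[c]_0$ is the $\equiv_0$-class of $c$. Forests: finite $F\subseteq\omega^+$ closed under nonempty prefixes (prefix order); trees: finite prefix-closed $V\subseteq\omega^*$; $\mathcal F_{\mathcal T_k}$: forests labeled by $\bar k$-labeled trees $(V,v)$. $F\le_h(C_{\mathcal M};\le_0,\le_1,A)$ means: there is a monotone $\varphi:(F,\sqsubseteq)\to(C_{\mathcal M};\le_0)$ such that for every $\tau\in F$ with $c(\tau)=(V,v)$ there is a monotone $\psi:(V,\sqsubseteq)\to([\varphi(\tau)]_0;\le_1)$ with $v(\sigma)=A(\psi(\sigma))$ for all $\sigma\in V$. $B\le_{CA}D$ iff $B=D\circ g$ for a continuous $g:X^\omega\to X^\omega$. $\mathbf\Sigma(F)$: the set of $k$-partitions determined by some $F$-family over the 2-base $(\mathbf\Sigma^0_1,\mathbf\Sigma^0_2)$ (open sets, countable unions of closed sets), where an $F$-family is $\{U_\tau\}_{\tau\in F}$ open,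 $U_{\tau i}\subseteq U_\tau$, $\bigcup U_\tau=X^\omega$, plus for each $\tau$ with $c(\tau)=(V,v)$ sets $U_{\tau\sigma}=\tilde U_\tau\cap B_{\tau\sigma}$, $B_{\tau\sigma}\in\mathbf\Sigma^0_2$, $U_{\tau\sigma i}\subseteq U_{\tau\sigma}$, $\bigcup_\sigma U_{\tau\sigma}=\tilde U_\tau$ (with $\tilde U_\tau=U_\tau\setminus\bigcup_{\tau i\in F}U_{\tau i}$), and it determines $B$ if $B(x)=v(\sigma)$ whenever $x\in U_{\tau\sigma}\setminus\bigcup_{\sigma i\in V}U_{\tau\sigma i}$. *)

(* Defs.v *)
From mathcomp Require Import all_boot.
From mathcomp Require Import boolp.
Set Implicit Arguments. Unset Strict Implicit. Unset Printing Implicit Defensive.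

Definition word (X : Type) := nat -> X.

Definition openw (X : Type) (U : word X -> Prop) : Prop :=
  forall x, U x -> exists n, forall y, (forall m, m < n -> y m = x m) -> U y.

Definition closedw (X : Type) (C : word X -> Prop) : Prop :=
  openw (fun x => ~ C x).

Definition sigma02 (X : Type) (S : word X -> Prop) : Prop :=
  exists Cs : nat -> word X -> Prop,
    (forall n, closedw (Cs n)) /\ (forall x, S x <-> exists n, Cs n x).

Definition continuousw (X : Type) (g : word X -> word X) : Prop :=
  forall U, openw U -> openw (fun x => U (g x)).

Record automaton (X : finType) := Automaton {
  state : finType;
  init : state;
  delta : state -> X -> state }.

Section Aut.
Variables (X : finType) (M : automaton X).

Fixpoint run (xi : word X) (n : nat) : state M :=
  if n is m.+1 then delta (run xi m) (xi m) else init M.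

Definition fM (xi : word X) : {set state M} :=
  [set q | `[< forall n, exists m, n <= m /\ run xi m = q >]].

Definition inCM (c : {set state M}) : Prop := exists xi, fM xi = c.

Definition edge : rel (state M) := fun p q => [exists x, q == delta p x].
Definition reach (p q : state M) : bool := connect edge p q.

Definition le0 (c d : {set state M}) : Prop :=
  forall p q, p \in c -> q \in d -> reach p q.
Definition equiv0 (c d : {set state M}) : Prop := le0 c d /\ le0 d c.
Definition le1 (c d : {set state M}) : Prop := d \subset c.
Definition in_class0 (c d : {set state M}) : Prop := inCM d /\ equiv0 d c.
End Aut.

Definition is_forest (F : seq (seq nat)) : Prop :=
  (forall tau, tau \in F -> tau != [::]) /\
  (forall tau sigma, tau \in F -> sigma != [::] -> prefix sigma tau -> sigma \in F).

Definition is_tree (V : seq (seq nat)) : Prop :=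
  forall sigma rho, sigma \in V -> prefix rho sigma -> rho \in V.

(* a k-labeled tree (V, v) with v : V -> {0..k-1} (v given as a total function,
   only its values on V matter) *)
Definition ltree (k : nat) := (seq (seq nat) * (seq nat -> 'I_k))%type.

Definition is_lforest (k : nat) (F : seq (seq nat)) (c : seq nat -> ltree k) : Prop :=
  is_forest F /\ (forall tau, tau \in F -> is_tree (c tau).1).

Definition h_le (X : finType) (M : automaton X) (k : nat)
    (A : {set state M} -> 'I_k) (F : seq (seq nat)) (c : seq nat -> ltree k) : Prop :=
  exists phi : seq nat -> {set state M},
    (forall tau, tau \in F -> inCM (phi tau)) /\
    (forall tau tau', tau \in F -> tau' \in F -> prefix tau tau' ->
        le0 (phi tau) (phi tau')) /\
    (forall tau, tau \in F ->
      exists psi : seq nat -> {set state M},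
        (forall sigma, sigma \in (c tau).1 -> in_class0 (phi tau) (psi sigma)) /\
        (forall sigma sigma', sigma \in (c tau).1 -> sigma' \in (c tau).1 ->
            prefix sigma sigma' -> le1 (psi sigma) (psi sigma')) /\
        (forall sigma, sigma \in (c tau).1 -> (c tau).2 sigma = A (psi sigma))).

Section Family.
Variables (X : finType) (k : nat) (F : seq (seq nat)) (c : seq nat -> ltree k).
Variables (U : seq nat -> word X -> Prop) (Bs : seq nat -> seq nat -> word X -> Prop).

Definition Utilde (tau : seq nat) (x : word X) : Prop :=
  U tau x /\ (forall i, rcons tau i \in F -> ~ U (rcons tau i) x).

Definition Uts (tau sigma : seq nat) (x : word X) : Prop :=
  Utilde tau x /\ Bs tau sigma x.

Definition is_family : Prop :=
  (forall tau, tau \in F -> openw (U tau)) /\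
  (forall tau i, tau \in F -> rcons tau i \in F ->
      forall x, U (rcons tau i) x -> U tau x) /\
  (forall x, exists2 tau, tau \in F & U tau x) /\
  (forall tau, tau \in F ->
     (forall sigma, sigma \in (c tau).1 -> sigma02 (Bs tau sigma)) /\
     (forall sigma i, sigma \in (c tau).1 -> rcons sigma i \in (c tau).1 ->
        forall x, Uts tau (rcons sigma i) x -> Uts tau sigma x) /\
     (forall x, Utilde tau x <-> exists2 sigma, sigma \in (c tau).1 & Uts tau sigma x)).

Definition determines (B : word X -> 'I_k) : Prop :=
  forall tau sigma x, tau \in F -> sigma \in (c tau).1 ->
    Uts tau sigma x ->
    (forall i, rcons sigma i \in (c tau).1 -> ~ Uts tau (rcons sigma i) x) ->
    B x = (c tau).2 sigma.
End Family.

Definition SigmaF (X : finType) (k : nat) (F : seq (seq nat)) (c : seq nat -> ltree k)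
    (B : word X -> 'I_k) : Prop :=
  exists (U : seq nat -> word X -> Prop) (Bs : seq nat -> seq nat -> word X -> Prop),
    is_family F c U Bs /\ determines F c U Bs B.

Definition le_CA (X : finType) (k : nat) (B D : word X -> 'I_k) : Prop :=
  exists g : word X -> word X, continuousw g /\ B = D \o g.

(* Main.v *)
Require Import Defs.
From mathcomp Require Import all_boot boolp zify.
From Stdlib Require Import Lia.
Set Implicit Arguments. Unset Strict Implicit. Unset Printing Implicit Defensive.

Lemma fin_bound (T : eqType) (l : seq T) (P : T -> nat -> Prop) :
  (forall a, a \in l -> exists m, P a m) ->
  exists B, forall a, a \in l -> exists2 m, m <= B & P a m.
Proof.
elim: l => [|b l IH] H; first by exists 0.
have [B HB] := IH (fun a ha => H a (@mem_behead _ (b :: l) _ ha)).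
have [mb Hb] := H b (mem_head _ _).
exists (maxn B mb) => a; rewrite inE => /orP [/eqP -> | ha].
  by exists mb => //; rewrite leq_maxr.
have [m hm Pm] := HB a ha; exists m => //; exact: leq_trans hm (leq_maxl _ _).
Qed.

Lemma ev_all (T : eqType) (l : seq T) (P : nat -> T -> Prop) :
  (forall a, a \in l -> exists s0, forall s, s0 <= s -> P s a) ->
  exists s0, forall s, s0 <= s -> forall a, a \in l -> P s a.
Proof.
move=> H; have [B HB] := fin_bound H.
exists B => s hs a ha; have [m hm Pm] := HB a ha; apply: Pm; exact: leq_trans hm hs.
Qed.

Section Walks.
Variables (X : finType) (M : automaton X).
Implicit Types (q p r : state M) (w : seq X) (xi : word X).

Definition dl q (a : X) := delta q a.
Definition final q w := foldl dl q w.
Definition states q w := q :: scanl dl q w.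
Definition pre (T : Type) (xi : word T) n := [seq xi i | i <- iota 0 n].

Lemma run_pre xi m : run M xi m = final (init M) (pre xi m).
Proof.
elim: m => [//|m IH]; rewrite [LHS]/= IH /final /pre -addn1 iotaD map_cat foldl_cat /=.
by rewrite add0n.
Qed.

Lemma seg xi L m :
  final (run M xi m) [seq xi i | i <- iota m L] = run M xi (m + L) /\
  states (run M xi m) [seq xi i | i <- iota m L] = [seq run M xi i | i <- iota m L.+1].
Proof.
elim: L m => [|L IH] m; first by rewrite addn0.
have [h1 h2] := IH m.+1.
split; first by rewrite /= -/(final _ _) h1 addSnnS.
by rewrite /states /= -/(states _ _) h2.
Qed.

Lemma inFM xi r : r \in fM M xi <-> forall n, exists m, n <= m /\ run M xi m = r.
Proof. by rewrite inE; split => [/asboolP|?]; last apply/asboolP. Qed.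

Lemma FM_tail xi : exists N, forall m, N <= m -> run M xi m \in fM M xi.
Proof.
have H : forall q, q \in enum (state M) -> exists s0, forall s, s0 <= s ->
   (q \notin fM M xi -> run M xi s != q).
  move=> q _; case: (boolP (q \in fM M xi)) => hq; first by exists 0.
  apply: contrapT => hne; case/negP: hq; apply/inFM => n.
  apply: contrapT => hn; apply: hne; exists n => s hs _; apply/eqP => e; apply: hn.
  by exists s.
have [N HN] := ev_all H.
exists N => m hm; apply: contrapT => hn.
by move: (HN m hm (run M xi m) (mem_enum _ _) (introN idP hn)); rewrite eqxx.
Qed.

Lemma FM_nonempty xi : exists r, r \in fM M xi.
Proof. have [N HN] := FM_tail xi; exists (run M xi N); exact: HN. Qed.

Lemma final_in_states q w : final q w \in states q w.
Proof.
rewrite /states.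
have -> : final q w = nth q (q :: scanl dl q w) (size w) by rewrite nth_cons_scanl // take_size.
by apply: mem_nth; rewrite /= size_scanl.
Qed.

Lemma states_cat q w1 w2 :
  states q (w1 ++ w2) = states q w1 ++ scanl dl (final q w1) w2.
Proof. by rewrite /states scanl_cat. Qed.

Lemma final_cat q w1 w2 : final q (w1 ++ w2) = final (final q w1) w2.
Proof. by rewrite /final foldl_cat. Qed.

Lemma walk_cover xi p : p \in fM M xi -> exists w, [/\ w != [::],
  {subset states p w <= fM M xi} & {subset fM M xi <= states p w}].
Proof.
move=> hp; have [N HN] := FM_tail xi.
have [m1 [hm1 e1]] := (proj1 (inFM xi p) hp) N.
have H : forall q, q \in enum (fM M xi) -> exists m, m1 < m /\ run M xi m = q.
  by move=> q; rewrite mem_enum => hq; exact: (proj1 (inFM xi q) hq) m1.+1.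
have [B HB] := fin_bound H.
exists [seq xi i | i <- iota m1 B.+1].
have [_ h2] := seg xi B.+1 m1; rewrite -e1 h2; split => //.
  move=> r /mapP [i]; rewrite mem_iota => /andP [hi _] ->; apply: HN.
  exact: leq_trans hm1 hi.
move=> q hq; have [m hm [hm' <-]] := HB q ltac:(by rewrite mem_enum).
apply: map_f; rewrite mem_iota (ltnW hm') /=.
lia.
Qed.

Lemma walk_to xi p q : p \in fM M xi -> q \in fM M xi -> exists w,
  {subset states p w <= fM M xi} /\ final p w = q.
Proof.
move=> hp hq; have [N HN] := FM_tail xi.
have [m1 [hm1 e1]] := (proj1 (inFM xi p) hp) N.
have [m2 [hm2 e2]] := (proj1 (inFM xi q) hq) m1.
exists [seq xi i | i <- iota m1 (m2 - m1)].
have [h1 h2] := seg xi (m2 - m1) m1; rewrite -e1 h1 h2 subnKC // e2; split => //.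
move=> r /mapP [i]; rewrite mem_iota => /andP [hi _] ->; apply: HN.
exact: leq_trans hm1 hi.
Qed.

Lemma reach_final p w : reach p (final p w).
Proof.
elim: w p => [|a w IH] p; first exact: connect0.
apply: connect_trans (IH (delta p a)); apply: connect1.
by apply/existsP; exists a.
Qed.

Lemma reach_walk p q : reach p q -> exists w, final p w = q.
Proof.
move/connectP => [s]; elim: s p => [|a s IH] p /=; first by move=> _ ->; exists [::].
move=> /andP [/existsP [x /eqP ea] hs] hq.
have [w hw] := IH a hs hq; exists (x :: w); by rewrite /= /dl -ea.
Qed.

Lemma reach_init xi r : r \in fM M xi -> reach (init M) r.
Proof.
move=> /inFM /(_ 0) [m [_ <-]]; rewrite run_pre; exact: reach_final.
Qed.

Lemma inCM_nonempty (d : {set state M}) : inCM d -> exists r, r \in d.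
Proof. by move=> [xi <-]; exact: FM_nonempty. Qed.

Lemma walk_cat q w1 (e : {set state M}) : inCM e -> final q w1 \in e ->
  exists w, [/\ w != [::], {subset e <= states q w}, final q w \in e &
     forall r, r \in states q w -> r \in states q w1 \/ r \in e].
Proof.
move=> [xi' <-] he; have [w2 [hn hs hc]] := walk_cover he.
exists (w1 ++ w2); split.
- by move: hn; rewrite -!size_eq0 size_cat; lia.
- move=> r /hc; rewrite states_cat /states inE mem_cat => /orP [/eqP ->|->].
    by rewrite final_in_states.
  by rewrite orbT.
- by rewrite final_cat; apply: hs; exact: final_in_states.
- move=> r; rewrite states_cat mem_cat => /orP [->|h]; first by left.
  by right; apply: hs; rewrite /states inE h orbT.
Qed.

End Walks.


Lemma find_iota_ge (P : pred nat) s K : (forall j, j < K -> ~~ P j) -> K <= s ->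
  K <= find P (iota 0 s).
Proof.
move=> hP hK; rewrite leqNgt; apply/negP => hf.
have hs : find P (iota 0 s) < size (iota 0 s) by rewrite size_iota; lia.
have := @nth_find _ 0 P (iota 0 s); rewrite has_find hs => /(_ isT).
rewrite nth_iota ?add0n; last by rewrite size_iota in hs.
by move=> hp; move: (hP _ hf); rewrite hp.
Qed.

Lemma find_iota_le (P : pred nat) s j : P j -> j < s -> find P (iota 0 s) <= j.
Proof.
move=> hj hs; rewrite leqNgt; apply/negP => hf.
have := @before_find _ 0 P (iota 0 s) j hf.
by rewrite nth_iota // hj.
Qed.

Section Wit.
Variable (X : Type).
Definition agreep (p : seq X) (y : word X) := forall m, m < size p -> y m = nth (y m) p m.
Definition meets (p : seq X) (C : word X -> Prop) : bool := `[< exists y, agreep p y /\ C y >].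
Definition wit (D : nat -> word X -> Prop) (p : seq X) : nat :=
  find (fun j => meets p (D j)) (iota 0 (size p)).

Lemma size_pre (x : word X) s : size (pre x s) = s.
Proof. by rewrite size_map size_iota. Qed.

Lemma nth_pre (x : word X) s m d : m < s -> nth d (pre x s) m = x m.
Proof. by move=> h; rewrite (nth_map 0) ?size_iota // nth_iota. Qed.

Lemma agree_pre (x : word X) s y : agreep (pre x s) y <-> forall m, m < s -> y m = x m.
Proof.
rewrite /agreep size_pre; split=> h m hm; rewrite h // nth_pre //.
Qed.

Lemma meets_x (x : word X) s (C : word X -> Prop) : C x -> meets (pre x s) C.
Proof. by move=> hC; apply/asboolP; exists x; split => //; apply/agree_pre. Qed.

Lemma closed_refute (x : word X) C : closedw C -> ~ C x ->
  exists m, forall s, m <= s -> ~~ meets (pre x s) C.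
Proof.
move=> hc hx; have [n hn] := hc x hx; exists n => s hs; apply/negP => /asboolP [y [hy hC]].
apply: (hn y) hC => m hm; apply: (proj1 (agree_pre _ _ _) hy); lia.
Qed.

Lemma wit_stable (x : word X) D : (forall j, closedw (D j)) -> (exists j, D j x) ->
  exists j0, D j0 x /\ exists s0, forall s, s0 <= s -> wit D (pre x s) = j0.
Proof.
move=> hc hex.
have hexb : exists j, `[< D j x >] by case: hex => j hj; exists j; apply/asboolP.
case: (ex_minnP hexb) => j0 /asboolP hj0 hmin.
have H : forall j, j \in iota 0 j0 -> exists s0, forall s, s0 <= s -> ~~ meets (pre x s) (D j).
  move=> j; rewrite mem_iota add0n => /andP [_ hj]; apply: closed_refute => // hD.
  by have := hmin j (introT (asboolP _) hD); lia.
have [s1 hs1] := ev_all H.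
exists j0; split => //; exists (maxn s1 j0.+1) => s hs.
rewrite /wit size_pre; apply/eqP; rewrite eqn_leq; apply/andP; split.
  by apply: find_iota_le; [exact: meets_x | lia].
apply: find_iota_ge; last by lia.
by move=> j hj; apply: hs1; [lia | rewrite mem_iota; lia].
Qed.

Lemma wit_unbounded (x : word X) D : (forall j, closedw (D j)) -> (forall j, ~ D j x) ->
  forall K, exists s0, forall s, s0 <= s -> K < wit D (pre x s).
Proof.
move=> hc hn K.
have H : forall j, j \in iota 0 K.+1 -> exists s0, forall s, s0 <= s -> ~~ meets (pre x s) (D j).
  by move=> j _; apply: closed_refute.
have [s1 hs1] := ev_all H.
exists (maxn s1 K.+1) => s hs; rewrite /wit size_pre.
apply: find_iota_ge; last by lia.
by move=> j hj; apply: hs1; [lia | rewrite mem_iota; lia].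
Qed.
End Wit.


Lemma prefix_comp (T : eqType) (a b z : seq T) :
  prefix a z -> prefix b z -> size a <= size b -> prefix a b.
Proof.
elim: z a b => [|y z IH] [|u a] [|v b] //=.
move=> /andP [/eqP -> h1] /andP [/eqP -> h2]; rewrite ltnS eqxx /= => hs; exact: IH.
Qed.

Lemma prefix_anti (T : eqType) (a b : seq T) : prefix a b -> prefix b a -> a = b.
Proof.
elim: a b => [|u a IH] [|v b] //= /andP [/eqP -> h1] /andP [_ h2]; by rewrite (IH b).
Qed.

Fixpoint lcp (s t : seq nat) : seq nat :=
  match s, t with
  | a :: s', b :: t' => if a == b then a :: lcp s' t' else [::]
  | _, _ => [::]
  end.

Lemma lcp_prefl s t : prefix (lcp s t) s.
Proof. elim: s t => [|a s IH] [|b t] //=; case: eqP => //= _; by rewrite eqxx IH. Qed.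

Lemma lcp_prefr s t : prefix (lcp s t) t.
Proof. elim: s t => [|a s IH] [|b t] //=; case: eqP => //= ->; by rewrite eqxx IH. Qed.

Lemma lcp_max r s t : prefix r s -> prefix r t -> prefix r (lcp s t).
Proof.
elim: s r t => [|a s IH] r t; first by case: r.
case: r => [|u r]; first by rewrite !prefix0s. case: t => [|b t]; first by move=> _ /=.
move=> /= /andP [/eqP -> h1] /andP [/eqP -> h2]; rewrite eqxx /= eqxx; exact: IH.
Qed.

Definition childb (t t' : seq nat) := (size t' == (size t).+1) && prefix t t'.

Lemma childbP t t' : childb t t' -> exists i, t' = rcons t i.
Proof.
move=> /andP [/eqP hs /prefixP [s2 e]]; move: hs; rewrite e size_cat.
case: s2 e => [|i [|j s2]] e /=; try lia.
by move=> _; exists i; rewrite cats1.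
Qed.

Lemma childb_rcons t i : childb t (rcons t i).
Proof. by rewrite /childb size_rcons eqxx prefix_rcons. Qed.

Lemma pre_prev (X : Type) (x : word X) s : take (size (pre x s)).-1 (pre x s) = pre x s.-1.
Proof. by rewrite size_pre /pre -map_take take_iota; congr map; congr iota; lia. Qed.

Lemma pre_eq (X : Type) (x y : word X) n s : (forall m, m < n -> x m = y m) -> s <= n ->
  pre x s = pre y s.
Proof. move=> h hs; apply/eq_in_map => i; rewrite mem_iota => hi; apply: h; lia. Qed.

Definition pickw (X : Type) (P : seq X -> Prop) : seq X :=
  if pselect (exists w, P w) is left h then proj1_sig (cid h) else [::].

Lemma pickwP (X : Type) (P : seq X -> Prop) : (exists w, P w) -> P (pickw P).
Proof. by move=> h; rewrite /pickw; case: pselect => // h'; case: (cid h'). Qed.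

Section Constr.
Variables (X : finType) (M : automaton X) (k : nat).
Variables (F : seq (seq nat)) (c : seq nat -> ltree k).
Variables (U : seq nat -> word X -> Prop) (Cs : seq nat -> seq nat -> nat -> word X -> Prop).
Variables (phi : seq nat -> {set state M}) (psi : seq nat -> seq nat -> {set state M}).

Definition V tau := (c tau).1.
Definition ch tau rho := [seq s <- V tau | childb rho s].
Definition DU tau rho (j : nat) :=
  Cs tau (nth rho (ch tau rho) (j %% size (ch tau rho))) (j %/ size (ch tau rho)).
Definition prevp (p : seq X) := take (size p).-1 p.
Definition cond p tau rho :=
  (ch tau rho != [::]) && (wit (DU tau rho) p == wit (DU tau rho) (prevp p)).
Definition best p tau rho := nth rho (ch tau rho) (wit (DU tau rho) p %% size (ch tau rho)).
Fixpoint desc p tau n rho :=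
  if n is n'.+1 then (if cond p tau rho then desc p tau n' (best p tau rho) else rho) else rho.
Definition maxV tau := \max_(s <- V tau) size s.
Definition sel p tau := desc p tau (maxV tau).+1 [::].

Definition det (p : seq X) t := `[< forall y, agreep p y -> U t y >].

Definition Ptree (q : state M) (osp : option (seq nat)) tau sg (w : seq X) :=
  [/\ w != [::], {subset psi tau sg <= states q w}, final q w \in psi tau sg &
      forall sp, osp = Some sp -> {subset states q w <= psi tau (lcp sp sg)}].

Definition cfg := (option (seq nat * option (seq nat)) * state M)%type.

Definition cands (p : seq X) (cf : cfg) :=
  [seq t <- F | (if cf.1 is Some (tau, _) then childb tau t else true) && det p t].

Definition step (p : seq X) (cf : cfg) : cfg * seq X :=
  if cands p cf is t :: _ then
    let w := pickw (fun w => final cf.2 w \in phi t) in ((Some (t, None), final cf.2 w), w)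
  else if cf.1 is Some (tau, osp) then
    let sg := sel p tau in
    if sg \in V tau then
      let w := pickw (Ptree cf.2 osp tau sg) in ((Some (tau, Some sg), final cf.2 w), w)
    else (cf, [::])
  else (cf, [::]).

Fixpoint cfgs (x : word X) s : cfg :=
  if s is s'.+1 then (step (pre x s') (cfgs x s')).1 else (None, init M).
Definition blk x s := (step (pre x s) (cfgs x s)).2.
Fixpoint outs x s := if s is s'.+1 then outs x s' ++ blk x s' else [::].

Lemma step_final p cf : (step p cf).1.2 = final cf.2 (step p cf).2.
Proof.
rewrite /step; case: (cands p cf) => [|t l] //=.
case: cf.1 => [[tau osp]|] //=; by case: ifP.
Qed.

Lemma cfgs_final x s : (cfgs x s).2 = final (init M) (outs x s).
Proof.
elim: s => [//|s IH] /=; by rewrite step_final final_cat -IH.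
Qed.

Lemma locality x y n : (forall m, m < n -> x m = y m) -> forall s, s <= n ->
  cfgs x s = cfgs y s /\ outs x s = outs y s.
Proof.
move=> h; elim=> [//|s IH] hs /=.
have [e1 e2] := IH (ltnW hs).
by rewrite /blk e1 e2 (pre_eq h (ltnW hs)).
Qed.

Lemma outs_prefix x s t : s <= t -> exists r, outs x t = outs x s ++ r.
Proof.
move=> /subnK <-; elim: (t - s) => [|d [r IH]]; first by exists [::]; rewrite cats0.
by exists (r ++ blk x (d + s)); rewrite addSn /= IH catA.
Qed.


Hypothesis HphiC : forall tau, tau \in F -> inCM (phi tau).
Hypothesis Hphi0 : forall tau tau', tau \in F -> tau' \in F -> prefix tau tau' ->
  le0 (phi tau) (phi tau').
Hypothesis HpsiC : forall tau sg, tau \in F -> sg \in V tau -> in_class0 (phi tau) (psi tau sg).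
Hypothesis Hpsi1 : forall tau sg sg', tau \in F -> sg \in V tau -> sg' \in V tau ->
  prefix sg sg' -> le1 (psi tau sg) (psi tau sg').
Hypothesis HVtree : forall tau, tau \in F -> is_tree (V tau).

Definition Inv x (cf : cfg) : Prop :=
  match cf with
  | (None, q) => q = init M
  | (Some (tau, osp), q) => [/\ tau \in F, U tau x, (forall r, r \in phi tau -> reach q r) &
       (forall sg, osp = Some sg -> sg \in V tau /\ q \in psi tau sg)]
  end.

Lemma det_U x s t : det (pre x s) t -> U t x.
Proof. by move=> /asboolP; apply; apply/agree_pre. Qed.

Lemma cands_mem p cf t l : cands p cf = t :: l ->
  [/\ t \in F, det p t & is_true (if cf.1 is Some (tau, _) then childb tau t else true)].
Proof.
move=> e; have : t \in cands p cf by rewrite e mem_head.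
rewrite mem_filter; case/andP => /andP [h1 h2] h3; by split.
Qed.

Lemma psi_sub tau sg sg' : tau \in F -> sg \in V tau -> sg' \in V tau -> prefix sg sg' ->
  {subset psi tau sg' <= psi tau sg}.
Proof. by move=> hF h1 h2 hp; apply/subsetP; exact: Hpsi1 hF h1 h2 hp. Qed.

Lemma Ptree_ex x tau osp q sg : Inv x (Some (tau, osp), q) -> sg \in V tau ->
  exists w, Ptree q osp tau sg w.
Proof.
case=> hF hU hreach hosp hsg.
have [hC hE] := HpsiC hF hsg.
have [p hp] := inCM_nonempty hC.
case: osp hosp => [sp|] hosp.
- have [hsp hq] := hosp sp erefl.
  have hrho : lcp sp sg \in V tau := HVtree hF hsg (lcp_prefr sp sg).
  have [xi hxi] := (HpsiC hF hrho).1.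
  have sub1 := psi_sub hF hrho hsp (lcp_prefl sp sg).
  have sub2 := psi_sub hF hrho hsg (lcp_prefr sp sg).
  have hq' : q \in fM M xi by rewrite hxi; apply: sub1.
  have hp' : p \in fM M xi by rewrite hxi; apply: sub2.
  have [w1 [hs1 hf1]] := walk_to hq' hp'.
  have hfp : final q w1 \in psi tau sg by rewrite hf1.
  have [w [hn hc hfin hst]] := walk_cat hC hfp.
  exists w; split => // _ [<-] r /hst [/hs1|/sub2 //]; by rewrite hxi.
- have [r hr] := inCM_nonempty (HphiC hF).
  have [w1 hf1] := reach_walk (connect_trans (hreach r hr) (hE.2 r p hr hp)).
  have hfp : final q w1 \in psi tau sg by rewrite hf1.
  have [w [hn hc hfin hst]] := walk_cat hC hfp.
  by exists w; split.
Qed.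

Lemma Inv_step x s cf : Inv x cf -> Inv x (step (pre x s) cf).1.
Proof.
rewrite /step; case e: (cands (pre x s) cf) => [|t l].
  case: cf e => [[[tau osp]|] q] e //= hI.
  case: ifP => // hsg /=.
  have := pickwP (Ptree_ex hI hsg).
  set w := pickw _; case=> hn hc hfin hst.
  case: hI => hF hU hreach _; split => //.
    move=> r hr; have [_ hE] := HpsiC hF hsg; exact: hE.1 _ _ hfin hr.
  by move=> sg' [<-].
have [ht hd hch] := cands_mem e.
move=> hI /=.
have [r' hr'] := inCM_nonempty (HphiC ht).
have hreach : reach cf.2 r'.
  case: cf hI hch {e} => [[[tau osp]|] q] /=.
    case=> hF _ hre _ /childbP [i ei].
    have [r hr] := inCM_nonempty (HphiC hF).
    apply: connect_trans (hre r hr) _; apply: (Hphi0 hF ht) hr hr'.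
    by rewrite ei prefix_rcons.
  move=> -> _; have [xi hxi] := HphiC ht; rewrite -hxi in hr'; exact: reach_init hr'.
have [w1 hw1] := reach_walk hreach.
have hw1' : final cf.2 w1 \in phi t by rewrite hw1.
have := pickwP (ex_intro (fun w => final cf.2 w \in phi t) w1 hw1').
set w := pickw _ => hfin.
split => //; first exact: det_U hd.
by move=> r hr; exact: (Hphi0 ht ht (prefix_refl t)) hfin hr.
Qed.

Lemma Inv_all x s : Inv x (cfgs x s).
Proof. by elim: s => [//|s IH] /=; apply: Inv_step. Qed.

Lemma ch_mem tau rho sg : (sg \in ch tau rho) = (sg \in V tau) && childb rho sg.
Proof. by rewrite mem_filter andbC. Qed.

Lemma size_maxV tau sg : sg \in V tau -> size sg <= maxV tau.
Proof. by move=> h; exact: (@leq_bigmax_seq _ _ xpredT (fun s => size s) sg h). Qed.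

Lemma cond_child p tau rho : cond p tau rho ->
  best p tau rho \in V tau /\ childb rho (best p tau rho).
Proof.
move=> /andP [hch _]; have : best p tau rho \in ch tau rho.
  by apply: mem_nth; apply: ltn_pmod; rewrite lt0n size_eq0.
by rewrite ch_mem => /andP.
Qed.

Lemma desc_prefix p tau n rho : prefix rho (desc p tau n rho).
Proof.
elim: n rho => [|n IH] rho /=; first exact: prefix_refl.
case: ifP => hc; last exact: prefix_refl.
have [_ /andP [_ h]] := cond_child hc; exact: prefix_trans h (IH _).
Qed.

Lemma desc_in p tau n rho : rho \in V tau -> desc p tau n rho \in V tau.
Proof.
elim: n rho => [|n IH] rho //= h; case: ifP => hc //; apply: IH; exact: (cond_child hc).1.
Qed.

Lemma prefix_eqsize (a b : seq nat) : prefix a b -> size b <= size a -> a = b.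
Proof. move=> h hs; apply: prefix_anti h (prefix_comp (prefix_refl b) h hs). Qed.

Lemma desc_D1 p tau n rho0 rho : prefix rho0 rho -> prefix rho (desc p tau n rho0) ->
  rho != desc p tau n rho0 -> cond p tau rho /\ prefix (best p tau rho) (desc p tau n rho0).
Proof.
elim: n rho0 => [|n IH] rho0 h1 h2 h3 /=.
  by move: h3; rewrite /= (prefix_anti h1 h2) eqxx.
move: h2 h3; rewrite /=; case: ifP => hc h2 h3; last first.
  by move: h3; rewrite (prefix_anti h1 h2) eqxx.
have [hbV /andP [/eqP hbs hbp]] := cond_child hc.
case: (eqVneq rho rho0) => [->|hne]; first by split => //; exact: desc_prefix.
apply: IH => //; apply: prefix_comp (desc_prefix _ _ _ _) h2 _.
rewrite hbs; rewrite ltnNge; apply/negP => hs.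
by move: hne; rewrite (prefix_eqsize h1 hs) eqxx.
Qed.

Lemma desc_D2 p tau n rho0 :
  ~~ cond p tau (desc p tau n rho0) \/ size (desc p tau n rho0) = size rho0 + n.
Proof.
elim: n rho0 => [|n IH] rho0 /=; first by right; rewrite addn0.
case: ifP => hc; last by left; rewrite hc.
have [_ /andP [/eqP hbs _]] := cond_child hc.
case: (IH (best p tau rho0)) => [h|h]; [by left | right; rewrite h hbs; lia].
Qed.

Lemma cond_size p tau rho : cond p tau rho -> size rho < maxV tau.
Proof.
move=> hc; have [hb /andP [/eqP hbs _]] := cond_child hc.
by have := size_maxV hb; rewrite hbs.
Qed.

Lemma sel_nocond p tau : ~~ cond p tau (sel p tau).
Proof.
case: (desc_D2 p tau (maxV tau).+1 [::]) => // h; apply/negP => hc.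
by have := cond_size hc; rewrite /sel h /=; lia.
Qed.

Lemma sel_S1 p tau rho : prefix rho (sel p tau) -> cond p tau rho ->
  prefix (best p tau rho) (sel p tau).
Proof.
move=> h hc; have hne : rho != sel p tau.
  by apply/eqP => e; move: (sel_nocond p tau); rewrite -e hc.
exact: (desc_D1 (prefix0s rho) h hne).2.
Qed.

Lemma sel_S2 p tau rho : prefix rho (sel p tau) -> ~~ cond p tau rho -> sel p tau = rho.
Proof.
move=> h hc; apply/eqP; rewrite eq_sym; apply: contraNT hc => hne.
exact: (desc_D1 (prefix0s rho) h hne).1.
Qed.

Variable Bs : seq nat -> seq nat -> word X -> Prop.
Hypothesis HCs : forall tau sg, tau \in F -> sg \in V tau ->
  (forall n, closedw (Cs tau sg n)) /\ (forall x, Bs tau sg x <-> exists n, Cs tau sg n x).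

Lemma node_step x tau rho : tau \in F -> rho \in V tau ->
  (exists s0, forall s, s0 <= s -> prefix rho (sel (pre x s) tau)) ->
  (exists c0, [/\ c0 \in V tau, childb rho c0, Bs tau c0 x &
      exists s1, forall s, s1 <= s -> prefix c0 (sel (pre x s) tau)])
  \/ ((forall i, rcons rho i \in V tau -> ~ Bs tau (rcons rho i) x) /\
      (forall n, exists2 s, n <= s & sel (pre x s) tau = rho)).
Proof.
move=> hF hrho [s0 hs0].
case: (eqVneq (ch tau rho) [::]) => hch.
  right; split.
    move=> i hi _; have : rcons rho i \in ch tau rho by rewrite ch_mem hi childb_rcons.
    by rewrite hch.
  move=> n; exists (maxn n s0); first exact: leq_maxl.
  by apply: sel_S2; [apply: hs0; exact: leq_maxr | rewrite /cond hch].
have hK : 0 < size (ch tau rho) by rewrite lt0n size_eq0.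
have hnth j : nth rho (ch tau rho) (j %% size (ch tau rho)) \in ch tau rho.
  by apply: mem_nth; exact: ltn_pmod.
have hnV j : nth rho (ch tau rho) (j %% size (ch tau rho)) \in V tau.
  by have := hnth j; rewrite ch_mem => /andP [].
have hclosed : forall j, closedw (DU tau rho j).
  by move=> j; exact: (HCs hF (hnV j)).1.
case: (pselect (exists j, DU tau rho j x)) => hex.
  left; have [j0 [hj0 [s1 hs1]]] := wit_stable hclosed hex.
  exists (nth rho (ch tau rho) (j0 %% size (ch tau rho))); split => //.
  - by have := hnth j0; rewrite ch_mem => /andP [].
  - by apply/(HCs hF (hnV j0)).2; exists (j0 %/ size (ch tau rho)).
  exists (maxn s0 s1.+1) => s hs.
  have hc : cond (pre x s) tau rho.
    rewrite /cond hch /prevp pre_prev hs1; last by lia.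
    by rewrite hs1 //; lia.
  have := sel_S1 (hs0 s ltac:(lia)) hc.
  by rewrite /best hs1 //; lia.
right; split.
  move=> i hi hB; have hc : rcons rho i \in ch tau rho by rewrite ch_mem hi childb_rcons.
  have [n hn] := (proj1 ((HCs hF hi).2 x)) hB.
  apply: hex; exists (n * size (ch tau rho) + index (rcons rho i) (ch tau rho)).
  have hi' : index (rcons rho i) (ch tau rho) < size (ch tau rho) by rewrite index_mem.
  rewrite /DU modnMDl (modn_small hi') divnMDl // (divn_small hi') addn0.
  by rewrite nth_index.
move=> n; apply: contrapT => hno.
have hex' : forall j, ~ DU tau rho j x by move=> j hj; apply: hex; exists j.
set N := maxn n s0.
have hc : forall s, N <= s -> cond (pre x s) tau rho.
  move=> s hs; apply: contrapT => /negP hnc; apply: hno; exists s; first by lia.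
  by apply: sel_S2 => //; apply: hs0; lia.
have hconst : forall d, wit (DU tau rho) (pre x (N + d)) = wit (DU tau rho) (pre x N).
  elim=> [|d IH]; first by rewrite addn0.
  have := hc (N + d.+1) (leq_addr _ _); rewrite /cond /prevp pre_prev => /andP [_ /eqP ->].
  by rewrite addnS /= IH.
have [s2 hs2] := wit_unbounded hclosed hex' (wit (DU tau rho) (pre x N)).
have := hs2 (N + s2) (leq_addl _ _); by rewrite hconst ltnn.
Qed.

Lemma tree_ind x tau : tau \in F -> forall d rho, maxV tau - size rho <= d ->
  rho \in V tau -> Bs tau rho x ->
  (exists s0, forall s, s0 <= s -> prefix rho (sel (pre x s) tau)) ->
  exists sg, [/\ sg \in V tau, Bs tau sg x,
    (forall i, rcons sg i \in V tau -> ~ Bs tau (rcons sg i) x),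
    (exists s1, forall s, s1 <= s -> prefix sg (sel (pre x s) tau)) &
    (forall n, exists2 s, n <= s & sel (pre x s) tau = sg)].
Proof.
move=> hF; elim=> [|d IH] rho hd hrho hB hev;
  case: (node_step hF hrho hev) => [[c0 [hc0 /andP [/eqP hcs _] hBc hevc]] | [hleaf hinf]].
- by exfalso; have := size_maxV hc0; rewrite hcs; move: hd; rewrite leqn0 subn_eq0 => h1 h2; move: (leq_trans h2 h1); rewrite ltnn.
- by exists rho; split.
- apply: (IH c0) => //; rewrite hcs subnS.
  have e : forall m, m <= d.+1 -> m.-1 <= d by case.
  exact: e _ hd.
- by exists rho; split.
Qed.

Hypothesis HUopen : forall t, t \in F -> openw (U t).
Hypothesis Hcover : forall x, exists2 t, t \in F & U t x.
Hypothesis HUts : forall tau, tau \in F -> forall x,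
  Utilde F U tau x <-> exists2 sg, sg \in V tau & Uts F U Bs tau sg x.
Hypothesis Hnest : forall tau sg i, tau \in F -> sg \in V tau -> rcons sg i \in V tau ->
  forall x, Uts F U Bs tau (rcons sg i) x -> Uts F U Bs tau sg x.

Definition otau (cf : cfg) := if cf.1 is Some (t, _) then Some t else None.
Definition rank (cf : cfg) := if otau cf is Some t then (size t).+1 else 0.

Lemma step_cases p cf : (cands p cf = [::] /\ otau (step p cf).1 = otau cf) \/
  (exists t l, cands p cf = t :: l /\ otau (step p cf).1 = Some t).
Proof.
rewrite /step; case e: (cands p cf) => [|t l]; last by right; exists t, l.
left; split => //; case: cf e => [[[tau osp]|] q] e //=; by case: ifP.
Qed.

Lemma rank_step p cf : rank cf <= rank (step p cf).1 /\
  (cands p cf != [::] -> rank cf < rank (step p cf).1).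
Proof.
case: (step_cases p cf) => [[-> e]|[t [l [e1 e2]]]]; first by rewrite /rank e.
have [_ _ hch] := cands_mem e1.
suff h : rank cf < rank (step p cf).1 by split => //; exact: ltnW.
rewrite /rank e2; case: cf hch {e1 e2} => [[[tau osp]|] q] //= /andP [/eqP -> _].
by rewrite ltnSn.
Qed.

Lemma open_det x t : openw (U t) -> U t x -> exists n, forall s, n <= s -> det (pre x s) t.
Proof.
move=> ho hx; have [n hn] := ho x hx; exists n => s hs; apply/asboolP => y hy.
apply: hn => m hm; apply: (proj1 (agree_pre _ _ _) hy); lia.
Qed.

Lemma mono_le (f : nat -> nat) : (forall s, f s <= f s.+1) -> forall a b, a <= b -> f a <= f b.
Proof.
move=> h a b /subnK <-; elim: (b - a) => [|d IH]; first by rewrite add0n.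
exact: leq_trans IH (h _).
Qed.

Lemma mono_stable (f : nat -> nat) N : (forall s, f s <= f s.+1) -> (forall s, f s <= N) ->
  exists s0, forall s, s0 <= s -> f s = f s0.
Proof.
move=> hm hb.
suff H : forall d (g : nat -> nat), (forall s, g s <= g s.+1) -> (forall s, g s <= N) ->
  N - g 0 <= d -> exists s0, forall s, s0 <= s -> g s = g s0 by exact: H _ f hm hb (leqnn _).
elim=> [|d IH] g gm gb hd.
  exists 0 => s _; apply/eqP; rewrite eqn_leq (mono_le gm (leq0n s)) andbT.
  by have := gb s; lia.
case: (pselect (exists s, g 0 < g s)) => [[s1 hs1]|hno].
  have gm' : forall s, g (s1 + s) <= g (s1 + s.+1) by move=> s; rewrite addnS; exact: gm.
  have gb' : forall s, g (s1 + s) <= N by move=> s; exact: gb.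
  have hd' : N - g (s1 + 0) <= d by rewrite addn0; have := gb s1; lia.
  have [s0 hs0] := IH (fun s => g (s1 + s)) gm' gb' hd'.
  exists (s1 + s0) => s hs; have := hs0 (s - s1) ltac:(lia); rewrite subnKC //; lia.
exists 0 => s _; apply/eqP; rewrite eqn_leq (mono_le gm (leq0n s)) andbT leqNgt.
by apply/negP => h; apply: hno; exists s.
Qed.

Lemma tree_step_eq p tau osp q : cands p (Some (tau, osp), q) = [::] -> sel p tau \in V tau ->
  step p (Some (tau, osp), q) =
  ((Some (tau, Some (sel p tau)), final q (pickw (Ptree q osp tau (sel p tau)))),
    pickw (Ptree q osp tau (sel p tau))).
Proof. by rewrite /step => -> /= ->. Qed.

Lemma Uts_down tau x : tau \in F -> forall sg, sg \in V tau -> Uts F U Bs tau sg x ->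
  Uts F U Bs tau [::] x.
Proof.
move=> hF; elim/last_ind => [//|sg i IH] hV hU.
have hV' : sg \in V tau := HVtree hF hV (prefix_rcons sg i).
exact: IH hV' (Hnest hF hV' hV hU).
Qed.

Lemma stable x : exists tau sg s0, [/\ tau \in F, sg \in V tau, Uts F U Bs tau sg x,
  (forall i, rcons sg i \in V tau -> ~ Uts F U Bs tau (rcons sg i) x) &
  ((forall s, s0 <= s -> blk x s != [::] /\
      {subset states (cfgs x s).2 (blk x s) <= psi tau sg}) /\
  (forall n, exists2 s, n <= s & {subset psi tau sg <= states (cfgs x s).2 (blk x s)}))].
Proof.
pose R s := rank (cfgs x s).
have Rmono : forall s, R s <= R s.+1 by move=> s; exact: (rank_step _ _).1.
have Rbound : forall s, R s <= (\max_(t <- F) size t).+1.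
  move=> s; rewrite /R /rank /otau; have := Inv_all x s.
  case: (cfgs x s) => [[[t osp]|] q] //= [hF _ _ _].
  by rewrite ltnS; exact: (@leq_bigmax_seq _ _ xpredT (fun s => size s) t hF).
have [s0 hs0] := mono_stable Rmono Rbound.
have hnc : forall s, s0 <= s -> cands (pre x s) (cfgs x s) = [::].
  move=> s hs; apply/eqP; apply: contraT => hne.
  have := (rank_step (pre x s) (cfgs x s)).2 hne.
  by rewrite -/(R s) -[(step _ _).1]/(cfgs x s.+1) -/(R s.+1) (hs0 s hs) hs0 ?ltnn //; lia.
have hot : forall d, otau (cfgs x (s0 + d)) = otau (cfgs x s0).
  elim=> [|d IH]; first by rewrite addn0.
  rewrite addnS /=; case: (step_cases (pre x (s0 + d)) (cfgs x (s0 + d))) => [[_ ->] //|].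
  by move=> [t [l [e _]]]; rewrite hnc in e; [|exact: leq_addr].
have hot' : forall s, s0 <= s -> otau (cfgs x s) = otau (cfgs x s0).
  by move=> s /subnKC <-; exact: hot.
have hcand : forall s t, s0 <= s -> t \in F -> det (pre x s) t ->
    (if (cfgs x s).1 is Some (tau, _) then childb tau t else true) -> False.
  move=> s t hs ht hd hc; have : t \in cands (pre x s) (cfgs x s).
    by rewrite mem_filter hc hd ht.
  by rewrite hnc.
case e0: (otau (cfgs x s0)) => [tau|]; last first.
  exfalso; have [t ht hU] := Hcover x; have [n hn] := open_det (HUopen ht) hU.
  apply: (hcand (maxn s0 n) t (leq_maxl _ _) ht (hn _ (leq_maxr _ _))).
  have := hot' (maxn s0 n) (leq_maxl _ _); rewrite e0 /otau.
  by case: (cfgs x (maxn s0 n)) => [[[]|] ?].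
have hSome : forall s, s0 <= s -> exists osp, (cfgs x s).1 = Some (tau, osp).
  move=> s hs; have := hot' s hs; rewrite e0 /otau.
  by case: (cfgs x s) => [[[t osp]|] q] //= [->]; exists osp.
have [osp0 hosp0] := hSome s0 (leqnn _).
have [hF hUx _ _] : Inv x (Some (tau, osp0), (cfgs x s0).2).
  by rewrite -hosp0; case: (cfgs x s0) (Inv_all x s0).
have hUtil : Utilde F U tau x.
  split => // i hi hU; have [n hn] := open_det (HUopen hi) hU.
  apply: (hcand (maxn s0 n) _ (leq_maxl _ _) hi (hn _ (leq_maxr _ _))).
  have [osp ->] := hSome (maxn s0 n) (leq_maxl _ _); exact: childb_rcons.
have [sg0 hsg0 hUts0] := (HUts hF x).1 hUtil.
have hroot : [::] \in V tau := HVtree hF hsg0 (prefix0s _).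
have [_ hB0] := Uts_down hF hsg0 hUts0.
have hselV : forall s, sel (pre x s) tau \in V tau by move=> s; exact: desc_in.
have [sgs [hsgV hBs hleaf [s1 hs1] hinf]] := tree_ind hF (leqnn (maxV tau - size [::]))
  hroot hB0 (ex_intro _ 0 (fun s _ => prefix0s _)).
have hstep : forall s, s0 <= s -> exists osp, [/\ (cfgs x s).1 = Some (tau, osp),
    Ptree (cfgs x s).2 osp tau (sel (pre x s) tau) (blk x s) &
    (cfgs x s.+1).1 = Some (tau, Some (sel (pre x s) tau))].
  move=> s hs; have [osp hosp] := hSome s hs; exists osp.
  have hI := Inv_all x s; have hnc' := hnc s hs.
  rewrite /blk /=; move: hI hnc'; case: (cfgs x s) hosp => cf1 q /= -> hI hnc'.
  rewrite tree_step_eq //; split => //; exact: pickwP (Ptree_ex hI (hselV s)).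
exists tau, sgs, (maxn s0 s1).+1; split => //; first by move=> i hi [_ hB]; exact: hleaf i hi hB.
split.
- move=> s hs.
  have [osp [h1 [hn hc hfin hst] h3]] := hstep s ltac:(lia).
  split => //.
  have [osp' [_ _ h3']] := hstep s.-1 ltac:(lia).
  rewrite prednK in h3'; last by lia.
  rewrite h1 in h3'; case: h3' => eosp.
  have hlcp := hst _ eosp.
  set a := sel (pre x s.-1) tau in hlcp *; set b := sel (pre x s) tau in hlcp *.
  have hl : lcp a b \in V tau := HVtree hF (hselV s) (lcp_prefr a b).
  have hpl : prefix sgs (lcp a b) by apply: lcp_max; apply: hs1; lia.
  move=> r /hlcp; exact: psi_sub hF hsgV hl hpl r.
- move=> n; have [s hs es] := hinf (maxn n s0).
  exists s; first by lia.
  have [osp [_ [_ hc _ _] _]] := hstep s ltac:(lia).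
  by rewrite -es.
Qed.

Lemma size_outsS x s : size (outs x s.+1) = size (outs x s) + size (blk x s).
Proof. by rewrite /= size_cat. Qed.

Lemma size_outs_mono x s t : s <= t -> size (outs x s) <= size (outs x t).
Proof. by move=> h; have [r ->] := outs_prefix x h; rewrite size_cat leq_addr. Qed.

Lemma outs_grow x : exists s0, forall d, d <= size (outs x (s0 + d)).
Proof.
have [tau [sg [s0 [_ _ _ _ [hne _]]]]] := stable x.
exists s0; elim=> [//|d IH]; rewrite addnS size_outsS.
have := (hne (s0 + d) (leq_addr _ _)).1; rewrite -size_eq0 -lt0n => h; rewrite -addn1; exact: leq_add IH h.
Qed.

Lemma outs_unbounded x n : exists s, n <= size (outs x s).
Proof. by have [s0 h] := outs_grow x; exists (s0 + n). Qed.

Definition gs x n : nat :=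
  if pselect (exists s, n < size (outs x s)) is left h
  then ex_minn (P := fun s => n < size (outs x s)) h else 0.
Definition gg x n := nth (x 0) (outs x (gs x n)) n.

Lemma gs_spec x n : n < size (outs x (gs x n)).
Proof.
rewrite /gs; case: pselect => [h|h]; first by case: ex_minnP.
by exfalso; apply: h; exact: outs_unbounded x n.+1.
Qed.

Lemma outs_nth x s t m d d' : m < size (outs x s) -> m < size (outs x t) ->
  nth d (outs x s) m = nth d' (outs x t) m.
Proof.
wlog hst : s t d d' / s <= t.
  move=> W h1 h2; case: (leqP s t) => h; first exact: W.
  by apply/esym; apply: W => //; exact: ltnW.
move=> h1 h2; have [r e] := outs_prefix x hst; rewrite e nth_cat h1.
exact: set_nth_default.
Qed.

Lemma gP x s m : m < size (outs x s) -> gg x m = nth (x 0) (outs x s) m.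
Proof. by move=> h; rewrite /gg; apply: outs_nth => //; exact: gs_spec. Qed.

Lemma gg_cont : continuousw gg.
Proof.
move=> Y hY x hYx; have [n hn] := hY (gg x) hYx.
have [s hs] := outs_unbounded x n.
exists s => y hy; apply: hn => m hm.
have [_ e] := locality (fun m hm => hy m hm) (leqnn s).
rewrite (gP (_ : m < size (outs y s))); last by rewrite e; lia.
rewrite (gP (_ : m < size (outs x s))); last by lia.
by rewrite e; apply: set_nth_default; lia.
Qed.

Lemma pre_g x s m : m <= size (outs x s) -> pre (gg x) m = take m (outs x s).
Proof.
move=> hm; apply: (@eq_from_nth _ (x 0)); first by rewrite size_pre size_takel.
move=> i; rewrite size_pre => hi; rewrite nth_pre // nth_take // (gP (_ : i < size (outs x s))) //.
lia.
Qed.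

Lemma run_g x s j : j <= size (blk x s) ->
  run M (gg x) (size (outs x s) + j) = nth (init M) (states (cfgs x s).2 (blk x s)) j.
Proof.
move=> hj; rewrite run_pre (@pre_g x s.+1); last by rewrite size_outsS leq_add2l.
rewrite /= take_cat ltnNge leq_addr /= addKn final_cat -cfgs_final /states.
by rewrite nth_cons_scanl.
Qed.

Lemma fM_gg x : exists tau sg, [/\ tau \in F, sg \in V tau, Uts F U Bs tau sg x,
  (forall i, rcons sg i \in V tau -> ~ Uts F U Bs tau (rcons sg i) x) &
  fM M (gg x) = psi tau sg].
Proof.
have [tau [sg [s0 [hF hsg hU hleaf [hblk hinf]]]]] := stable x.
exists tau, sg; split => //; apply/setP => r; apply/idP/idP.
  move=> /inFM /(_ (size (outs x s0))) [m [hm <-]].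
  have [t ht] := outs_unbounded x m.+1.
  have ext : exists t, m < size (outs x t) by exists t.
  case: (ex_minnP ext) => t0 ht0 hmin.
  have ht0p : s0 < t0.
    rewrite ltnNge; apply/negP => h; have := size_outs_mono x h; lia.
  have hle : size (outs x t0.-1) <= m.
    rewrite leqNgt; apply/negP => h; have := hmin _ h; lia.
  move: ht0; rewrite -(prednK (leq_ltn_trans (leq0n _) ht0p)) size_outsS => ht0.
  have := @run_g x t0.-1 (m - size (outs x t0.-1)) ltac:(lia).
  rewrite subnKC // => ->; apply: (hblk t0.-1 ltac:(lia)).2; apply: mem_nth.
  by rewrite /= size_scanl; lia.
move=> hr; apply/inFM => n.
have [s hs hsub] := hinf (s0 + n).
have [s0' hg] := outs_grow x.
have [s' hs' hsub'] := hinf (maxn (s0 + n) (s0' + n)).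
have hr' := hsub' r hr.
exists (size (outs x s') + index r (states (cfgs x s').2 (blk x s'))); split.
  have := hg n; have := size_outs_mono x (_ : s0' + n <= s'); lia.
rewrite run_g ?nth_index //.
by move: hr'; rewrite -index_mem /states /= size_scanl ltnS.
Qed.

Lemma main_red (A : {set state M} -> 'I_k) (B : word X -> 'I_k) :
  (forall tau sg, tau \in F -> sg \in V tau -> (c tau).2 sg = A (psi tau sg)) ->
  determines F c U Bs B -> le_CA B (A \o fM M).
Proof.
move=> hA hdet; exists gg; split; first exact: gg_cont.
apply: funext => x /=; have [tau [sg [hF hsg hU hleaf e]]] := fM_gg x.
rewrite e -hA //; apply: hdet => // i hi; exact: hleaf.
Qed.

End Constr.

Unset Implicit Arguments.

Theorem lemma4p7 (X : finType) (k : nat) (M : automaton X)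
    (A : {set state M} -> 'I_k) (F : seq (seq nat)) (c : seq nat -> ltree k) :
  1 < #|X| -> 1 < k -> is_lforest F c -> h_le A F c ->
  forall B : word X -> 'I_k, SigmaF F c B -> le_CA B (A \o @fM X M).
Proof.
move=> _ _ [_ hVtree] [phi [hphiC [hphi0 hpsi]]] B [U [Bs [[hUo [_ [hcov hT]]] hdet]]].
have H1 : forall tau, exists ps : seq nat -> {set state M}, tau \in F ->
    [/\ (forall sg, sg \in (c tau).1 -> in_class0 (phi tau) (ps sg)),
        (forall sg sg', sg \in (c tau).1 -> sg' \in (c tau).1 -> prefix sg sg' ->
            le1 (ps sg) (ps sg')) &
        (forall sg, sg \in (c tau).1 -> (c tau).2 sg = A (ps sg))].
  move=> tau; case: (boolP (tau \in F)) => h; last by exists (fun _ => set0).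
  by have [ps [h1 [h2 h3]]] := hpsi tau h; exists ps.
case/choice: H1 => psi hpsi'.
have H2 : forall p : seq nat * seq nat, exists Cs : nat -> word X -> Prop,
    p.1 \in F -> p.2 \in (c p.1).1 ->
    (forall n, closedw (Cs n)) /\ (forall x, Bs p.1 p.2 x <-> exists n, Cs n x).
  move=> [tau sg] /=; case: (boolP (tau \in F)) => h; last by exists (fun _ _ => False).
  case: (boolP (sg \in (c tau).1)) => h'; last by exists (fun _ _ => False).
  by have [Cs hCs] := (hT tau h).1 sg h'; exists Cs.
case/choice: H2 => Cf hCf.
apply: (@main_red X M k F c U (fun tau sg => Cf (tau, sg)) phi psi _ _ _ _ _ Bs) => //.
- by move=> tau sg hF hsg; have [h _ _] := hpsi' tau hF; exact: h.
- by move=> tau sg sg' hF h1 h2 hp; have [_ h _] := hpsi' tau hF; exact: h.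
- by move=> tau sg hF hsg; exact: (hCf (tau, sg)).
- by move=> tau hF; exact: (hT tau hF).2.2.
- by move=> tau sg i hF h1 h2; exact: (hT tau hF).2.1 sg i h1 h2.
- by move=> tau sg hF hsg; have [_ _ h] := hpsi' tau hF; exact: h.
Qed.
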